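(* Let $p$ be a $\mathbb Z_2$-homogeneous monic element of $\mathcal{A}_E$ such that the associative composition $(p,t_{ij})_w$ is defined for some $w\in X^*$, where $t_{ij}=[e_i,f_j]-\delta_{ij}h_i$. Then $(p,t_{ij})_w\equiv(p)\tilde\partial_j\bmod(\{p\}\cup W,w)$.
   Context: Let $k$ be a field with $\mathrm{char}(k)\ne2,3$. $\Omega=\{1,\dots,r\}$, $\tau\subseteq\Omega$, $A=(a_{ij})_{i,j\in\Omega}$ a generalized Cartan matrix (entries $a_{ii}\in\{0,2\}$ with $a_{ii}=0\Rightarrow i\in\tau$; $a_{ij}\in\mathbb Z_{\le0}$ for $j\neq i$ when $a_{ii}\ne0$; $a_{ij}=0\Rightarrow a_{ji}=0$; $a_{ii}=2$, $i\in\tau\Rightarrow a_{ij}\in2\mathbb Z$). $X=E\cup H\cup F$, $E=\{e_i\}$, $H=\{h_i\}$, $F=\{f_i\}$, with $\deg i=\bar1$ iff $i\in\tau$, $\deg e_i=\deg f_i=\deg i$, $\deg h_i=\bar0$; order $e_i\succ h_j\succ f_k$ and $e_i\succ e_j$, $h_i\succ h_j$, $f_i\succ f_j$ iff $i>j$. $\mathcal A_E\subset\mathcal A_X$ are free associative algebras, with superbracket $[x,y]=xy-(-1)^{|x||y|}yx$. $W$ is the set $\{[h_i,h_j]\,(i>j),\ [e_i,f_j]-\delta_{ij}h_i,\ [e_j,h_i]+a_{ij}e_j,\ [h_i,f_j]+a_{ij}f_j\}$. The differential substitution $\tilde\partial_j$ is the linear map on $\mathcal A_E$ (with values in $\mathcal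 A_X$, written on the right) determined by $(e_i)\tilde\partial_j=\delta_{ij}h_j$ and $(uv)\tilde\partial_j=u\,(v)\tilde\partial_j+(-1)^{(\deg j)(\deg v)}(u)\tilde\partial_j\,v$ for homogeneous $u,v\in\mathcal A_E$. Orders: $X^*$ associative words; $u<1$ for nonempty $u$, $xu'<yv'$ iff $x\prec y$ or ($x=y$, $u'<v'$); $u\ll v$ iff $l(u)<l(v)$ or ($l(u)=l(v)$, $u<v$); $\bar p$ is the $\ll$-largest word of $p$, monic means its coefficient is $1$. Associative compositions of monic $p,q$: if $\bar pa=b\bar q=w$, $l(\bar p)>l(b)$: $(p,q)_w=pa-bq$; if $\bar p=a\bar qb=w$: $(p,q)_w=p-aqb$. $f\equiv g\bmod(S,w)$ means $f-g=\sum\alpha_ia_is_ib_i$ with $\alpha_i\in k$, $a_i,b_i\in X^*$, $s_i\in S$, $a_i\bar s_ib_i\ll w$. *)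

(* Defs.v *)
From HB Require Import structures.
From mathcomp Require Import all_boot all_order all_algebra.
From mathcomp Require Import finmap monalg.
Set Implicit Arguments. Unset Strict Implicit. Unset Printing Implicit Defensive.
Import GRing.Theory.
Local Open Scope ring_scope.

(* Generators X = E ∪ H ∪ F, indexed by Ω = 'I_r (0-based). *)
Notation gen r := (('I_r + 'I_r) + 'I_r)%type.
Definition ge {r} (i : 'I_r) : gen r := inl (inl i).
Definition gh {r} (i : 'I_r) : gen r := inl (inr i).
Definition gf {r} (i : 'I_r) : gen r := inr i.

(* The free associative algebra A_X over k: linear combinations of words. *)
Notation FAlg k r := {malg k[fmonom (gen r)]}.

Section Defs.
Variables (k : fieldType) (r : nat) (tau : {set 'I_r}).

Local Notation X := (gen r).
Local Notation P := (FAlg k r).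

Definition wp (w : seq X) : P := << FMonom w >>.

Definition degx (x : X) : bool :=
  match x with inl (inl i) => i \in tau | inl (inr _) => false | inr i => i \in tau end.
Definition wdeg (w : seq X) : bool := foldr (fun x b => degx x (+) b) false w.

Definition homog (p : P) (b : bool) : Prop :=
  forall m : fmonom X, m \in msupp p -> wdeg (fmonom_val m) = b.

Definition sgn (b : bool) : k := if b then -1 else 1.

Definition sbr (x y : X) : P := wp [:: x; y] - sgn (degx x && degx y) *: wp [:: y; x].

Definition isE (x : X) : bool := if x is inl (inl _) then true else false.
Definition inAE (p : P) : Prop :=
  forall m : fmonom X, m \in msupp p -> all isE (fmonom_val m).

Definition rankx (x : X) : nat :=
  match x with inl (inl i) => (2 * r + i)%N | inl (inr i) => (r + i)%N | inr i => nat_of_ord i end.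
Definition prec (x y : X) : bool := (rankx x < rankx y)%N.

Fixpoint wlt (u v : seq X) : bool :=
  match u, v with
  | [::], _ => false
  | _ :: _, [::] => true
  | x :: u', y :: v' => prec x y || ((x == y) && wlt u' v')
  end.

Definition wllt (u v : seq X) : bool :=
  (size u < size v)%N || ((size u == size v) && wlt u v).

(* leading word p̄: the ≪-largest word occurring in p ([::] if p = 0) *)
Definition lw (p : P) : seq X :=
  foldr (fun (m : fmonom X) acc => if wllt acc (fmonom_val m) then fmonom_val m else acc)
        [::] (msupp p).

Definition monicw (p : P) : Prop := p@_(FMonom (lw p)) = 1.

Definition composition (p q : P) (w : seq X) (c : P) : Prop :=
  (exists a b : seq X, [/\ lw p ++ a = w, b ++ lw q = w,
                          (size b < size (lw p))%N & c = p * wp a - wp b * q])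
  \/ (exists a b : seq X, [/\ lw p = a ++ lw q ++ b, w = lw p & c = p - wp a * q * wp b]).

Definition congr_mod (S : P -> Prop) (w : seq X) (f g : P) : Prop :=
  exists l : seq (k * seq X * P * seq X),
    (forall t, t \in l -> S t.1.2 /\ wllt (t.1.1.2 ++ lw t.1.2 ++ t.2) w) /\
    f - g = \sum_(t <- l) t.1.1.1 *: (wp t.1.1.2 * t.1.2 * wp t.2).

Definition tij (i j : 'I_r) : P :=
  sbr (ge i) (gf j) - (if i == j then wp [:: gh i] else 0).

Definition inW (A : 'M[int]_r) (s : P) : Prop :=
  (exists i j : 'I_r, (j < i)%N /\ s = sbr (gh i) (gh j))
  \/ (exists i j : 'I_r, s = tij i j)
  \/ (exists i j : 'I_r, s = sbr (ge j) (gh i) + (A i j)%:~R *: wp [:: ge j])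
  \/ (exists i j : 'I_r, s = sbr (gh i) (gf j) + (A i j)%:~R *: wp [:: gf j]).

Definition gcm (A : 'M[int]_r) : Prop :=
  [/\ forall i, A i i = 0 \/ A i i = 2,
      forall i, A i i = 0 -> i \in tau,
      forall i j, A i i != 0 -> j != i -> A i j <= 0,
      forall i j, A i j = 0 -> A j i = 0
    & forall i j, A i i = 2 -> i \in tau -> (2 %| A i j)%Z].

(* D is the differential substitution ∂̃_j on A_E (values in A_X, written on the right) *)
Definition is_diff_subst (j : 'I_r) (D : P -> P) : Prop :=
  [/\ forall i : 'I_r, D (wp [:: ge i]) = if i == j then wp [:: gh j] else 0,
      forall u v, inAE u -> inAE v -> D (u + v) = D u + D v,
      forall (c : k) u, inAE u -> D (c *: u) = c *: D u
    & forall u v bu bv, inAE u -> inAE v -> homog u bu -> homog v bv ->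
        D (u * v) = u * D v + sgn ((j \in tau) && bv) *: (D u * v)].

End Defs.

(* Main.v *)
Require Import Defs.
From HB Require Import structures.
From mathcomp Require Import all_boot all_order all_algebra.
From mathcomp Require Import finmap monalg.
From mathcomp Require Import zify.
Import GRing.Theory.
Local Open Scope ring_scope.

Module Aux.
Set Implicit Arguments. Unset Strict Implicit. Unset Printing Implicit Defensive.

Section Basic.
Variables (k : fieldType) (r : nat) (tau : {set 'I_r}).
Local Notation X := (gen r).
Local Notation P := (FAlg k r).
Local Notation wp := (@wp k r).
Local Notation isE := (@isE r).
Local Notation inAE := (@inAE k r).
Local Notation sgn := (@sgn k).

Lemma wp_cat u v : wp (u ++ v) = wp u * wp v.
Proof.
rewrite /wp malgM_def fgmulUU mulr1; congr << _ >>.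
by apply/val_inj; rewrite /= fmM.
Qed.

Lemma wp_nil : wp [::] = 1.
Proof. rewrite /wp; congr << _ >>; apply/val_inj; by rewrite /= fm1. Qed.

Lemma wp_cons x u : wp (x :: u) = wp [:: x] * wp u.
Proof. by rewrite -wp_cat. Qed.

Lemma msupp_wp u : msupp (wp u) = [fset FMonom u]%fset.
Proof. exact: msuppU1. Qed.

Lemma coef_wp u m : (wp u)@_m = (FMonom u == m)%:R.
Proof. exact: mcoeffU1. Qed.

Lemma inAE_wp (u : seq X) : all isE u -> inAE (wp u).
Proof. by move=> h m; rewrite msupp_wp inE => /eqP ->. Qed.

Lemma homog_wp u : homog tau (wp u) (wdeg tau u).
Proof. by move=> m; rewrite msupp_wp inE => /eqP ->. Qed.

Lemma inAE_add u v : inAE u -> inAE v -> inAE (u + v).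
Proof.
move=> hu hv m /(fsubsetP (msuppD_le u v)); rewrite inE => /orP [] ?; auto.
Qed.

Lemma inAE_scale (c : k) u : inAE u -> inAE (c *: u).
Proof. by move=> hu m /(fsubsetP (msuppZ_le c u)); auto. Qed.

Lemma inAE0 : inAE (0 : P).
Proof. by move=> m; rewrite msupp0. Qed.



Lemma monalg_wp (p : P) : p = \sum_(m <- msupp p) p@_m *: wp (fmonom_val m).
Proof.
rewrite {1}[p]monalgE; apply: eq_bigr => m _; rewrite /Defs.wp fmK.
apply/malgP => m'; rewrite mcoeffZ !mcoeffU.
by case: eqP; rewrite ?mulr1 ?mulr0.
Qed.

End Basic.


Section Ord.
Variable r : nat.
Local Notation X := (gen r).
Implicit Types (x y z : X) (u v w : seq X).

Lemma rankx_inj : injective (@rankx r).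
Proof.
move=> [[a|a]|a] [[b|b]|b] /=; have ha := ltn_ord a; have hb := ltn_ord b;
 move=> h; try (by move: h; lia);
 by rewrite (_ : a = b) //; apply/val_inj; move: h => /=; lia.
Qed.

Lemma prec_irr x : prec x x = false.
Proof. by rewrite /prec ltnn. Qed.

Lemma prec_trans y x z : prec x y -> prec y z -> prec x z.
Proof. rewrite /prec; exact: ltn_trans. Qed.

Lemma prec_total x y : x != y -> prec x y || prec y x.
Proof.
rewrite /prec => ne; case: (ltngtP (rankx x) (rankx y)) => // /rankx_inj e.
by rewrite e eqxx in ne.
Qed.

Lemma wlt_irr u : wlt u u = false.
Proof. by elim: u => //= x u ->; rewrite prec_irr andbF. Qed.

Lemma wlt_trans v u w : wlt u v -> wlt v w -> wlt u w.
Proof.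
elim: u v w => [|x u IH] [|y v] [|z w] //=.
case/orP=> [pxy|/andP[/eqP-> h1]]; case/orP=> [pyz|/andP[/eqP<- h2]].
- by rewrite (prec_trans pxy pyz).
- by rewrite pxy.
- by rewrite pyz.
- by rewrite eqxx (IH _ _ h1 h2) orbT.
Qed.

Lemma wlt_total u v : u != v -> wlt u v || wlt v u.
Proof.
elim: u v => [|x u IH] [|y v] //=.
rewrite eqseq_cons negb_and => h.
case: (eqVneq x y) h => [<-|nxy] h.
  by rewrite prec_irr /=; apply: IH; move: h.
by have /orP[->|->] := prec_total nxy; rewrite ?orbT.
Qed.

Lemma wllt_irr u : wllt u u = false.
Proof. by rewrite /wllt ltnn wlt_irr andbF. Qed.

Lemma wllt_trans v u w : wllt u v -> wllt v w -> wllt u w.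
Proof.
rewrite /wllt => /orP[h1|/andP[/eqP e1 h1]] /orP[h2|/andP[/eqP e2 h2]].
- by rewrite (ltn_trans h1 h2).
- by rewrite -e2 h1.
- by rewrite e1 h2.
- by rewrite e1 e2 eqxx (wlt_trans h1 h2) orbT.
Qed.

Lemma wllt_total u v : u != v -> wllt u v || wllt v u.
Proof.
rewrite /wllt => ne; case: (ltngtP (size u) (size v)) => //= e.
by rewrite ?e ?eqxx /=; apply: wlt_total.
Qed.

Lemma wllt_nil u : wllt [::] u = (u != [::]).
Proof. by case: u. Qed.

Definition fmax (s : seq (fmonom X)) :=
  foldr (fun (m : fmonom X) acc => if wllt acc (fmonom_val m) then fmonom_val m else acc) [::] s.

Lemma fmax_in s : s != [::] -> exists2 m, m \in s & fmonom_val m = fmax s.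
Proof.
elim: s => // m s IH _ /=; case: ifP => h.
  by exists m; rewrite ?inE ?eqxx.
case: s IH h => [|m' s] IH h.
  by exists m; rewrite ?inE ?eqxx //=; move: h; rewrite /= wllt_nil; case: (fmonom_val m) => //=; rewrite negbK => /eqP.
have [m1 h1 e1] := IH isT; exists m1 => //; by rewrite inE h1 orbT.
Qed.

Lemma fmax_max s m : m \in s -> fmonom_val m = fmax s \/ wllt (fmonom_val m) (fmax s).
Proof.
elim: s => // m0 s IH; rewrite inE => /orP[/eqP->|hm] /=; case: ifP => h.
- by left.
- case: (eqVneq (fmonom_val m0) (fmax s)) => [->|ne]; first by left.
  by right; have := wllt_total ne; rewrite h orbF.
- case: (IH hm) => [->|h2]; right => //; exact: wllt_trans h2 h.
- exact: IH.
Qed.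

End Ord.


Lemma gen_id (k : comRingType) (A : lalgType k)
  (ZAr : forall (c : k) (x y : A), x * (c *: y) = c *: (x * y)) (x U F H DU : A) (s3 s4 : k) :
  x * U * F - (s4 * s3) *: (F * (x * U)) - (x * DU + s3 *: (H * U)) =
  s3 *: ((x * F - s4 *: (F * x) - H) * U) + x * (U * F - s3 *: (F * U) - DU).
Proof.
rewrite !mulrBl !mulrBr -!scalerAl !ZAr !scalerBr scalerA [s3 * s4]mulrC !mulrA.
set a := x * U * F; set B := (s4 * s3) *: _; set C := s3 *: (x * F * U); set E := s3 *: (H * U).
set d := x * DU.
by rewrite [RHS]addrC !addrA (addrAC a (- C) (- d)) subrK opprD addrA (addrAC a (- B) (- d)).
Qed.

Lemma sgnX (k : fieldType) a b c : sgn k ((a (+) b) && c) = sgn k (a && c) * sgn k (b && c).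
Proof. by case: a; case: b; case: c; rewrite /sgn /= ?mulN1r ?opprK ?mul1r. Qed.

Section Gen.
Variables (k : fieldType) (r : nat) (tau : {set 'I_r}) (j : 'I_r).
Local Notation X := (gen r).
Local Notation isE := (@isE r).
Local Notation sgn := (@sgn k).
Variable (A : lalgType k).
Hypothesis ZAr : forall (c : k) (x y : A), x * (c *: y) = c *: (x * y).
Variable (W : seq X -> A).
Hypothesis Wcat : forall u v, W (u ++ v) = W u * W v.
Hypothesis Wnil : W [::] = 1.
Variable (D : A -> A).
Variables (Q : A -> Prop) (H : A -> bool -> Prop).
Hypothesis QW : forall u, all isE u -> Q (W u).
Hypothesis HW : forall u, H (W u) (wdeg tau u).
Hypothesis Q0 : Q 0.
Hypothesis QD : forall u v, Q u -> Q v -> Q (u + v).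
Hypothesis QZ : forall c u, Q u -> Q (c *: u).
Hypothesis DE : forall i, D (W [:: ge i]) = if i == j then W [:: gh j] else 0.
Hypothesis DA : forall u v, Q u -> Q v -> D (u + v) = D u + D v.
Hypothesis DZ : forall c u, Q u -> D (c *: u) = c *: D u.
Hypothesis DM : forall u v bu bv, Q u -> Q v -> H u bu -> H v bv ->
        D (u * v) = u * D v + sgn ((j \in tau) && bv) *: (D u * v).

Definition T (m : 'I_r) : A := W [:: ge m; gf j] - sgn (degx tau (ge m) && degx tau (gf j)) *: W [:: gf j; ge m]
   - (if m == j then W [:: gh m] else 0).
Definition F := W [:: gf j].
Definition dj := j \in tau.
Definition Ew (u : seq X) : A := W u * F - sgn (wdeg tau u && dj) *: (F * W u) - D (W u).
Definition tsum (l : seq (k * seq X * 'I_r * seq X)) : A :=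
  \sum_(t <- l) t.1.1.1 *: (W t.1.1.2 * T t.1.2 * W t.2).

Lemma W_cons x u : W (x :: u) = W [:: x] * W u.
Proof. by rewrite -Wcat. Qed.

Lemma D1 : D 1 = 0.
Proof.
have := DM (QW (u:=[::]) isT) (QW (u:=[::]) isT) (HW [::]) (HW [::]).
rewrite andbF /= /sgn scale1r !Wnil !mul1r mulr1 => h.
by apply/eqP; rewrite -(addrI _ (etrans (addr0 _) h)).
Qed.

Lemma D0 : D 0 = 0.
Proof. by have := DZ 0 (QW (u:=[::]) isT); rewrite !scale0r. Qed.

Lemma D_sum (I : eqType) (s : seq I) (cf : I -> k) (g : I -> seq X) :
  (forall i, i \in s -> all isE (g i)) ->
  D (\sum_(i <- s) cf i *: W (g i)) = \sum_(i <- s) cf i *: D (W (g i)).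
Proof.
elim: s => [|m s IH] hs; first by rewrite !big_nil D0.
have hm : all isE (g m) by apply: hs; rewrite inE eqxx.
have hs' : forall m', m' \in s -> all isE (g m') by move=> m' h; apply: hs; rewrite inE h orbT.
have hAE : Q (\sum_(i <- s) cf i *: W (g i)).
  clear IH hs; elim: s hs' => [|m' s IH'] hs'; first by rewrite big_nil.
  rewrite big_cons; apply: QD.
    by apply/QZ/QW/hs'; rewrite inE eqxx.
  by apply: IH' => m'' h; apply: hs'; rewrite inE h orbT.
rewrite !big_cons DA; [|exact/QZ/QW|exact: hAE].
by rewrite DZ ?IH //; exact: QW.
Qed.

Lemma Ew_nil : Ew [::] = 0.
Proof. by rewrite /Ew Wnil D1 /= /sgn scale1r mul1r mulr1 !subrr. Qed.

Lemma wdeg_cons x u : wdeg tau (x :: u) = degx tau x (+) wdeg tau u.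
Proof. by []. Qed.

Lemma Ew_cons m u : all isE u ->
  Ew (ge m :: u) = sgn (wdeg tau u && dj) *: (T m * W u) + W [:: ge m] * Ew u.
Proof.
move=> hu.
rewrite /Ew W_cons (DM (QW (u:=[:: ge m]) isT) (QW hu) (HW _) (HW _)).
rewrite DE /T wdeg_cons [W [:: ge m; gf j]]W_cons [W [:: gf j; ge m]]W_cons -/F.
rewrite sgnX [dj && _]andbC -/dj.
have -> : (if m == j then W [:: gh m] else 0) = (if m == j then W [:: gh j] else 0).
  by case: eqP => // ->.
exact: gen_id.
Qed.


Lemma Ew_rcons b x : all isE b -> exists l : seq (k * seq X * 'I_r * seq X),
  (forall t, t \in l -> rcons b (ge x) = t.1.1.2 ++ ge t.1.2 :: t.2 /\ t.2 != [::]) /\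
  Ew (rcons b (ge x)) = W b * T x + tsum l.
Proof.
elim: b => [|y b IH] /=.
  move=> _; exists [::]; split => //.
  by rewrite Ew_cons // Ew_nil mulr0 addr0 Wnil mulr1 /tsum big_nil addr0 mul1r /sgn /= scale1r.
case: y => [[m|m]|m] //= hb.
have [l [hl el]] := IH hb.
exists ((sgn (wdeg tau (rcons b (ge x)) && dj), [::], m, rcons b (ge x))
        :: [seq (t.1.1.1, ge m :: t.1.1.2, t.1.2, t.2) | t <- l]).
split.
  move=> t; rewrite inE => /orP[/eqP -> /=|/mapP [t' ht' ->] /=].
    by split => //; case: (b).
  by have [-> ->] := hl t' ht'.
rewrite Ew_cons ?all_rcons ?hb // el /tsum big_cons big_map /= Wnil mul1r.
rewrite mulrDr mulr_sumr mulrA -W_cons; rewrite [LHS]addrCA; congr (_ + (_ + _)).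
apply: eq_bigr => t _; rewrite ZAr !mulrA -W_cons //.
Qed.

Lemma Ew_word u : all isE u -> exists l : seq (k * seq X * 'I_r * seq X),
  (forall t, t \in l -> u = t.1.1.2 ++ ge t.1.2 :: t.2) /\ Ew u = tsum l.
Proof.
case/lastP: u => [|b y] hu.
  by exists [::]; split => //; rewrite Ew_nil /tsum big_nil.
move: hu; rewrite all_rcons; case: y => [[x|x]|x] //= hb.
have [l [hl el]] := Ew_rcons x hb.
exists ((1, b, x, [::]) :: l); split.
  by move=> t; rewrite inE => /orP[/eqP -> /=|/hl []]; rewrite ?cats1.
by rewrite el /tsum big_cons /= scale1r Wnil mulr1.
Qed.

Lemma expand_id (I : eqType) (s : seq I) (cf : I -> k) (g : I -> seq X) (p : A) (b : bool) :
  p = \sum_(i <- s) cf i *: W (g i) ->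
  (forall i, i \in s -> all isE (g i) /\ wdeg tau (g i) = b) ->
  p * F - D p = sgn (b && dj) *: (F * p) + \sum_(i <- s) cf i *: Ew (g i).
Proof.
move=> ep hs.
have -> : \sum_(i <- s) cf i *: Ew (g i) =
   \sum_(i <- s) (cf i *: W (g i) * F) - \sum_(i <- s) sgn (b && dj) *: (F * (cf i *: W (g i)))
   - \sum_(i <- s) cf i *: D (W (g i)).
  rewrite -!sumrB; apply: eq_big_seq => i hi.
  rewrite /Ew; have [_ ->] := hs i hi.
  by rewrite !scalerBr -scalerAl ZAr !scalerA mulrC.
rewrite -D_sum; last by move=> i /hs [].
by rewrite -ep -mulr_suml -scaler_sumr -mulr_sumr -ep (addrAC (p * F)) addrC addNKr.
Qed.

Lemma split_id (I : eqType) (s : seq I) (cf : I -> k) (g : I -> seq X) (p : A) (b : bool)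
    (i0 : I) (bb : seq X) (x : 'I_r) (l : seq (k * seq X * 'I_r * seq X)) :
  p = \sum_(i <- s) cf i *: W (g i) ->
  (forall i, i \in s -> all isE (g i) /\ wdeg tau (g i) = b) ->
  i0 \in s -> uniq s -> cf i0 = 1 -> Ew (g i0) = W bb * T x + tsum l ->
  p * F - W bb * T x - D p =
    sgn (b && dj) *: (F * p) + tsum l + \sum_(i <- s | i != i0) cf i *: Ew (g i).
Proof.
move=> ep hs hi0 us c1 e0.
rewrite (addrAC _ (- _) (- D p)) (expand_id ep hs) (bigD1_seq i0 hi0 us) /= c1 scale1r e0.
set a := sgn _ *: _; set w := W bb * T x; set z := \sum_(i <- s | _) _.
by rewrite -addrA -(addrA w) (addrC (w + _)) addKr addrA.
Qed.

End Gen.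


Section RepSec.
Variables (k : fieldType) (r : nat) (tau : {set 'I_r}).
Local Notation X := (gen r).
Local Notation P := (FAlg k r).
Local Notation wp := (@wp k r).
Local Notation isE := (@isE r).
Local Notation inAE := (@inAE k r).
Local Notation sgn := (@sgn k).

Variables (S : P -> Prop) (w : seq X).

Definition Rep (f : P) := exists l : seq (k * seq X * P * seq X),
    (forall t, t \in l -> S t.1.2 /\ wllt (t.1.1.2 ++ lw t.1.2 ++ t.2) w) /\
    f = \sum_(t <- l) t.1.1.1 *: (wp t.1.1.2 * t.1.2 * wp t.2).

Lemma Rep0 : Rep 0.
Proof. by exists [::]; rewrite big_nil. Qed.

Lemma RepD f g : Rep f -> Rep g -> Rep (f + g).
Proof.
move=> [l1 [h1 e1]] [l2 [h2 e2]]; exists (l1 ++ l2); split.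
  by move=> t; rewrite mem_cat => /orP[/h1|/h2].
by rewrite big_cat e1 e2.
Qed.

Lemma RepZ c f : Rep f -> Rep (c *: f).
Proof.
move=> [l [h e]]; exists [seq (c * t.1.1.1, t.1.1.2, t.1.2, t.2) | t <- l]; split.
  by move=> t /mapP [t' /h ht' ->].
by rewrite e big_map scaler_sumr; apply: eq_bigr => t _; rewrite scalerA.
Qed.

Lemma Rep1 c a s b : S s -> wllt (a ++ lw s ++ b) w -> Rep (c *: (wp a * s * wp b)).
Proof.
move=> hs hw; exists [:: (c, a, s, b)]; split; last by rewrite big_seq1.
by move=> t; rewrite inE => /eqP -> /=.
Qed.

Lemma Rep1' c a s : S s -> wllt (a ++ lw s ++ [::]) w -> Rep (c *: (wp a * s)).
Proof. by move=> hs hw; have := Rep1 c hs hw; rewrite wp_nil mulr1. Qed.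

Lemma Rep_sum (I : eqType) (s : seq I) (F : I -> P) :
  (forall i, i \in s -> Rep (F i)) -> Rep (\sum_(i <- s) F i).
Proof.
elim: s => [|i s IH] h; first by rewrite big_nil; exact: Rep0.
rewrite big_cons; apply: RepD; first by apply: h; rewrite inE eqxx.
by apply: IH => i' hi; apply: h; rewrite inE hi orbT.
Qed.

End RepSec.


Section LwSec.
Variables (k : fieldType) (r : nat) (tau : {set 'I_r}).
Local Notation X := (gen r).
Local Notation P := (FAlg k r).
Local Notation wp := (@wp k r).
Local Notation isE := (@isE r).
Local Notation sgn := (@sgn k).

Lemma lw_max (p : P) m : m \in msupp p -> fmonom_val m = lw p \/ wllt (fmonom_val m) (lw p).
Proof. exact: fmax_max. Qed.

Lemma lw_in (p : P) : p != 0 -> exists2 m, m \in msupp p & fmonom_val m = lw p.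
Proof.
move=> nz; apply: fmax_in; apply: contra nz => /eqP e.
by rewrite [p]monalgE e big_nil.
Qed.

Lemma lw_in' (p : P) : p != 0 -> FMonom (lw p) \in msupp p.
Proof. by case/lw_in => m hm <-; rewrite fmK. Qed.

Lemma lw_eq (q : P) m0 : m0 \in msupp q ->
  (forall m, m \in msupp q -> fmonom_val m = fmonom_val m0 \/ wllt (fmonom_val m) (fmonom_val m0)) ->
  lw q = fmonom_val m0.
Proof.
move=> h0 hmax.
have nz : q != 0 by apply: contraTneq h0 => ->; rewrite msupp0.
have [m1 h1 e1] := lw_in nz.
case: (hmax _ h1) => [<-|lt1] //; rewrite e1 in lt1.
case: (lw_max h0) => [e|lt2]; first by rewrite e in lt1; rewrite wllt_irr in lt1.
by have := wllt_trans lt1 lt2; rewrite wllt_irr.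
Qed.

Lemma lw_tij i j : lw (tij k tau i j) = [:: ge i; gf j].
Proof.
have coef m : (tij k tau i j)@_m =
   (FMonom [:: ge i; gf j] == m)%:R - sgn (degx tau (ge i) && degx tau (gf j)) * (FMonom [:: gf j; ge i] == m)%:R
    - (if i == j then (FMonom [:: gh i] == m)%:R else 0).
  rewrite /tij /sbr mcoeffB mcoeffB mcoeffZ.
  congr (_ - _ * _ - _); [exact: coef_wp | exact: coef_wp |].
  case: (i == j); [exact: coef_wp | exact: mcoeff0].
have ne1 : FMonom [:: gf j; ge i] != FMonom [:: ge i; gf j].
  by apply/eqP => /(congr1 (fun m : fmonom X => head (ge i) (fmonom_val m))) /= e; discriminate e.
have ne2 : FMonom [:: gh i] != FMonom [:: ge i; gf j].
  by apply/eqP => /(congr1 (fun m : fmonom X => head (ge i) (fmonom_val m))) /= e; discriminate e.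
have h0 : FMonom [:: ge i; gf j] \in msupp (tij k tau i j).
  rewrite -mcoeff_neq0 coef eqxx (negbTE ne1).
  have -> : (if i == j then (FMonom [:: gh i] == FMonom [:: ge i; gf j])%:R else 0) = 0 :> k.
    by case: (i == j); rewrite ?(negbTE ne2).
  by rewrite mulr0 !subr0 oner_eq0.
rewrite (lw_eq h0) // => m; rewrite -mcoeff_neq0 coef.
case: (eqVneq (FMonom [:: ge i; gf j]) m) => [<-|n1]; first by left.
case: (eqVneq (FMonom [:: gf j; ge i]) m) => [<-|n2].
  by right; rewrite /wllt /= /prec /=; have := ltn_ord j; lia.
case: (eqVneq (FMonom [:: gh i]) m) => [<-|n3].
  by right.
have z : false%:R = 0 :> k by [].
by rewrite z mulr0 !subr0; case: (i == j); rewrite ?subr0 ?eqxx.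
Qed.

End LwSec.


Section Key.
Variable r : nat.
Local Notation X := (gen r).
Local Notation isE := (@isE r).

Lemma prec_fE (y : 'I_r) (x : X) : isE x -> prec (gf y) x.
Proof. by case: x => [[x|x]|x] //= _; rewrite /prec /=; have := ltn_ord y; lia. Qed.

Lemma key (y : 'I_r) a1 a2 (v : seq X) : all isE v -> size (a1 ++ a2) = size v ->
  wlt (a1 ++ a2) v || ((a1 ++ a2 == v) && (a2 != [::])) ->
  wlt (a1 ++ gf y :: a2) (v ++ [:: gf y]).
Proof.
elim: a1 v => [|x a1 IH] [|z v] //= hv hs.
- by case: a2 hs.
- by rewrite prec_fE //; case/andP: hv.
- case/andP: hv => hz hv; case/orP => [/orP [->//|/andP [/eqP <- h]]|/andP [e h]].
    by rewrite eqxx (IH v hv) ?h ?orbT //; case: hs.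
  move: e; rewrite eqseq_cons => /andP[/eqP <- e].
  by rewrite eqxx (IH v hv) ?e ?h ?orbT //; case: hs.
Qed.

Lemma key3 (y : 'I_r) a (x : X) s u v : all isE v -> u = a ++ x :: s ->
  wllt u v || ((u == v) && (s != [::])) -> wllt (a ++ [:: x; gf y] ++ s) (v ++ [:: gf y]).
Proof.
move=> hv eu.
have e2 : a ++ [:: x; gf y] ++ s = (a ++ [:: x]) ++ gf y :: s by rewrite -catA.
have e3 : (a ++ [:: x]) ++ s = u by rewrite -catA.
have s1 : size ((a ++ [:: x]) ++ gf y :: s) = (size u).+1 by rewrite -e3 !size_cat /= addnS.
have s2 : size (v ++ [:: gf y]) = (size v).+1 by rewrite size_cat addn1.
rewrite /wllt e2 s1 s2 ltnS eqSS.
case/orP => [/orP [->//|/andP [hs h]]|/andP [/eqP e h]].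
- rewrite hs /=; apply/orP; right; apply: key => //; first by rewrite e3; exact/eqP.
  by rewrite e3 h.
- rewrite e eqxx ltnn /=; apply: key => //; first by rewrite e3 e.
  by rewrite e3 e eqxx h orbT.
Qed.

Lemma key0 (y : 'I_r) (L : seq X) : all isE L -> L != [::] ->
  wllt ([:: gf y] ++ L ++ [::]) (L ++ [:: gf y]).
Proof.
move=> hL nL; have s1 : size (gf y :: L) = size (L ++ [:: gf y]) by rewrite size_cat addn1.
rewrite cats0 /= /wllt s1 ltnn eqxx /=.
by apply: (@key y [::] L L) => //=; rewrite eqxx nL orbT.
Qed.

End Key.


Lemma malg_scalerAr (K : monomType) (R : comRingType) (c : R) (x y : {malg R[K]}) :
  x * (c *: y) = c *: (x * y).
Proof.
rewrite -!mul_malgC mulrA [RHS]mulrA; congr (_ * _).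
rewrite mul_malgC {1}[x]monalgE mulr_suml [x in RHS]monalgE scaler_sumr.
apply: eq_bigr => m _.
rewrite malgM_def fgmulUU mulm1; apply/malgP => m'.
by rewrite mcoeffZ !mcoeffU mulrnAr mulrC.
Qed.

End Aux.
Import Aux.

Theorem lemma3p1 (k : fieldType) (r : nat) (tau : {set 'I_r}) (A : 'M[int]_r)
  (hk2 : 2 \notin [pchar k]%R) (hk3 : 3 \notin [pchar k])
  (hA : gcm tau A)
  (i j : 'I_r) (D : FAlg k r -> FAlg k r) (hD : is_diff_subst tau j D)
  (p : FAlg k r) (b : bool) (hpE : inAE p) (hph : homog tau p b) (hpm : monicw p)
  (w : seq (gen r)) (c : FAlg k r) :
  composition p (@tij k r tau i j) w c ->
  congr_mod (fun s => s = p \/ inW tau A s) w c (D p).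
Proof.
move=> hcomp.
have nzp : p != 0.
  apply/eqP => e; move: hpm; rewrite /monicw e mcoeff0 => /esym/eqP.
  by rewrite oner_eq0.
have hLin := lw_in' nzp.
have hLE : all (@isE r) (lw p) := hpE _ hLin.
case: hcomp => [[a [bb [e1 e2 hsz ec]]] | [a [bb [e1 _ _]]]]; last first.
  by move: hLE; rewrite e1 lw_tij !all_cat /= !andbF.
rewrite lw_tij in e2.
have [eL ea] : lw p = rcons bb (ge i) /\ a = [:: gf j].
  clear ec; move: hsz e1 hLE; rewrite -e2; case: a => [|a0 [|a1 a']] hsz e1 hLE.
  - by move: hLE; rewrite cats0 in e1; rewrite e1 all_cat /= !andbF.
  - have e3 : bb ++ [:: ge i; gf j] = rcons bb (ge i) ++ [:: gf j] by rewrite -cats1 -catA.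
    rewrite e3 in e1.
    have hs : size (lw p) = size (rcons bb (ge i)).
      by have := congr1 size e1; rewrite !size_cat /= size_rcons; lia.
    by move/eqP: e1; rewrite eqseq_cat // => /andP [/eqP -> /eqP [->]].
  - by have := congr1 size e1; rewrite !size_cat /=; lia.
have ew : w = lw p ++ [:: gf j] by rewrite -e1 ea.
suff : Rep (fun s => s = p \/ inW tau A s) w (c - D p) by [].
case: hD => hDE hDA hDZ hDM.
have hbb : all (@isE r) bb by move: hLE; rewrite eL all_rcons => /andP[].
have [l [hl el]] := Ew_rcons (A := GRing.Lalgebra.clone k (FAlg k r) _) (W := @wp k r) (D := D) (Q := @inAE k r) (H := homog tau)
   (@malg_scalerAr _ _) (@wp_cat k r) (wp_nil k r) (fun u h => @inAE_wp k r u h) (fun u => @homog_wp k r tau u) hDE hDM i hbb.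
rewrite -eL in el.
have hs : forall m, m \in msupp p -> all (@isE r) (fmonom_val m) /\ wdeg tau (fmonom_val m) = b.
  by move=> m hm; split; [exact: hpE | exact: hph].
have E := split_id (A := GRing.Lalgebra.clone k (FAlg k r) _) (W := @wp k r) (D := D) (Q := @inAE k r) (@malg_scalerAr _ _) (fun u h => @inAE_wp k r u h)
   (@inAE0 k r) (@inAE_add k r) (@inAE_scale k r) hDA hDZ (s := msupp p) (cf := fun m => p@_m)
   (g := @fmonom_val _) (monalg_wp p) hs hLin (fset_uniq _) hpm el.
rewrite ec ea.
rewrite E.
have nL : lw p != [::] by rewrite eL; case: (bb).
apply: RepD; [apply: RepD|].
- apply: Rep1'; first by left.
  by rewrite ew; apply: key0.
- apply: Rep_sum => t ht; apply: Rep1.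
    by right; right; left; exists t.1.2, j.
  rewrite (_ : lw _ = [:: ge t.1.2; gf j]); last exact: lw_tij.
  have [e3 ns] := hl t ht.
  rewrite ew; apply: (key3 j (u := lw p) hLE); first by rewrite eL.
  by rewrite eqxx ns orbT.
- rewrite -big_filter; apply: Rep_sum => m; rewrite mem_filter => /andP [nm hm].
  apply: RepZ.
  have [l' [hl' el']] := Ew_word (A := GRing.Lalgebra.clone k (FAlg k r) _) (W := @wp k r) (D := D)
     (Q := @inAE k r) (H := homog tau)
     (@malg_scalerAr _ _) (@wp_cat k r) (wp_nil k r) (fun u h => @inAE_wp k r u h)
     (fun u => @homog_wp k r tau u) hDE hDM (hpE _ hm).
  rewrite el'; apply: Rep_sum => t ht; apply: Rep1.
    by right; right; left; exists t.1.2, j.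
  rewrite (_ : lw _ = [:: ge t.1.2; gf j]); last exact: lw_tij.
  rewrite ew; apply: (key3 j hLE (hl' t ht)).
  case: (lw_max hm) => [e|->] //.
  by move: nm; rewrite -e fmK eqxx.
Qed.
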